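(* Let $n\ge2$ and $\mathbb{P}\in\mathcal{C}_n$. Then \[ R_n(\mathbb{P})=\sup_{x,y\in\mathbb{R}_{++}}\phi^{\mathbb{P}}(x,y). \]
   Context: Scheduling on two machines with $n$ tasks. A processing-time matrix is $T\in\mathbb{R}_{++}^{2\times n}$; an allocation is $X\in\{0,1\}^{2\times n}$ with $X_{1j}+X_{2j}=1$; makespan $M(X,T)=\max_{i\in\{1,2\}}\sum_jX_{ij}T_{ij}$; $M^*(T)=\min_XM(X,T)$. $\mathcal{P}_n$ is the set of Borel probability measures on $\mathbb{R}^n$ supported in $\mathbb{R}_{++}^n$. For $\mathbb{P}\in\mathcal{P}_n$, algorithm $\mathcal{A}^{\mathbb{P}}$ draws $\mathbf{z}\sim\mathbb{P}$ and sends task $j$ to machine 1 iff $T_{1j}/T_{2j}<z_j$ (else to machine 2); $M(\mathbb{P},T)$ is its expected makespan and $R_n(\mathbb{P})=\sup_{T\in\mathbb{R}_{++}^{2\times n}}M(\mathbb{P},T)/M^*(T)\in[1,\infty]$. $\mathcal{C}_n$ is the set of $\mathbb{P}\in\mathcal{P}_n$ invariant under permutations of coordinates. For $\mathbb{P}\in\mathcal{C}_n$ let $F_{\mathbb{P}}(x)=\mathbf{P}_{\mathbf{z}\sim\mathbb{P}}[z_1\le x]$ and $H_{\mathbb{P}}(x,y)=\mathbf{P}_{\mathbf{z}\sim\mathbb{P}}[z_1\le x,z_2\le y]$, and \[ \phi^{\mathbb{P}}(x,y)=1+y-\min\{1,1-\tfrac1x+y\}F_{\mathbb{P}}(x)-yF_{\mathbb{P}}(y)+\min\{1+\tfrac1x,1+y\}H_{\mathbb{P}}(x,y).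 \] *)

(* Defs.v *)
From HB Require Import structures.
From mathcomp Require Import all_boot all_order all_algebra all_fingroup.
From mathcomp Require Import all_classical all_reals all_analysis.
Set Implicit Arguments. Unset Strict Implicit. Unset Printing Implicit Defensive.
Import Order.TTheory GRing.Theory Num.Theory.
Local Open Scope classical_set_scope.
Local Open Scope ring_scope.

Section Sched.
Variable R : realType.

Definition m1 : 'I_2 := ord0.
Definition m2 : 'I_2 := ord_max.

Definition is_alloc n (X : 'M[R]_(2, n)) : Prop :=
  (forall i j, X i j = 0 \/ X i j = 1) /\ (forall j, X m1 j + X m2 j = 1).

Definition makespan n (X T : 'M[R]_(2, n)) : R :=
  Num.max (\sum_(j < n) X m1 j * T m1 j) (\sum_(j < n) X m2 j * T m2 j).

(* optimal makespan M*(T) = min over allocations (finite set, so inf = min) *)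
Definition opt_makespan n (T : 'M[R]_(2, n)) : R :=
  inf [set makespan X T | X in [set X | is_alloc X]].

Definition positive_matrix n (T : 'M[R]_(2, n)) : Prop :=
  forall i j, 0 < T i j.

Definition alg_alloc n (z : n.-tuple R) (T : 'M[R]_(2, n)) : 'M[R]_(2, n) :=
  \matrix_(i < 2, j < n)
    (if i == m1 then (if T m1 j / T m2 j < tnth z j then 1 else 0)
     else (if T m1 j / T m2 j < tnth z j then 0 else 1)).

Definition supported_pos n (P : probability (n.-tuple R) R) : Prop :=
  P [set z : n.-tuple R | forall j, 0 < tnth z j] = 1%E.

Definition perm_invariant n (P : probability (n.-tuple R) R) : Prop :=
  forall (s : 'S_n) (A : set (n.-tuple R)), measurable A ->
    P ((fun z : n.-tuple R => [tuple tnth z (s i) | i < n]) @^-1` A) = P A.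

Definition exp_makespan n (P : probability (n.-tuple R) R)
  (T : 'M[R]_(2, n)) : \bar R :=
  (\int[P]_z (makespan (alg_alloc z T) T)%:E)%E.

Definition approx_ratio n (P : probability (n.-tuple R) R) : \bar R :=
  ereal_sup [set (exp_makespan P T * ((opt_makespan T)^-1)%:E)%E
            | T in [set T : 'M[R]_(2, n) | positive_matrix T]].

(* F_P(x) = P[z_1 <= x],  H_P(x,y) = P[z_1 <= x, z_2 <= y]
   (z_1, z_2 are the coordinates of index 0 and 1; n >= 2 is assumed) *)
Definition cdfF n (P : probability (n.-tuple R) R) (x : R) : R :=
  fine (P [set z : n.-tuple R | nth 0 z 0 <= x]).

Definition cdfH n (P : probability (n.-tuple R) R) (x y : R) : R :=
  fine (P [set z : n.-tuple R | nth 0 z 0 <= x /\ nth 0 z 1 <= y]).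

Definition phiP n (P : probability (n.-tuple R) R) (x y : R) : R :=
  1 + y - Num.min 1 (1 - x^-1 + y) * cdfF P x - y * cdfF P y
    + Num.min (1 + x^-1) (1 + y) * cdfH P x y.

End Sched.

(* Main.v *)
Require Import Defs.
From HB Require Import structures.
From mathcomp Require Import all_boot all_order all_algebra all_fingroup.
From mathcomp Require Import all_classical all_reals all_analysis.
From mathcomp Require Import ring lra zify measurable_realfun.
Import Order.TTheory GRing.Theory Num.Theory.
Local Open Scope classical_set_scope.
Local Open Scope ring_scope.

Section HasE.
Set Implicit Arguments. Unset Strict Implicit.
Variable R : realType.
Variable n : nat.
Variable P : probability (n.-tuple R) R.
Local Notation T := (n.-tuple R).

Definition hasE (h : T -> R) (e : R) :=
  P.-integrable setT (EFin \o h) /\ (\int[P]_z (h z)%:E = e%:E)%E.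

Lemma finP (A : set T) : measurable A -> (P A)%E = (fine (P A))%:E.
Proof. by move=> mA; rewrite fineK // fin_num_measure. Qed.

Lemma hasE_indic A : measurable A -> hasE (\1_A) (fine (P A)).
Proof.
move=> mA; split; first exact: integrable_indic.
by rewrite integral_indic // setIT -finP.
Qed.

Lemma hasE_add h1 e1 h2 e2 : hasE h1 e1 -> hasE h2 e2 ->
  hasE (fun z => h1 z + h2 z) (e1 + e2).
Proof.
rewrite /hasE; move=> [i1 E1] [i2 E2].
have -> : EFin \o (fun z => h1 z + h2 z) = (EFin \o h1) \+ (EFin \o h2).
  by apply/funext => z.
split; first exact: integrableD.
rewrite (_ : (fun z => (h1 z + h2 z)%:E) = (EFin \o h1) \+ (EFin \o h2)); last by apply/funext.
by rewrite integralD_EFin // E1 E2.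
Qed.

Lemma hasE_scale c h e : hasE h e -> hasE (fun z => c * h z) (c * e).
Proof.
rewrite /hasE; move=> [i E].
have -> : EFin \o (fun z => c * h z) = (fun z => c%:E * (EFin \o h) z)%E.
  by apply/funext => z.
split; first exact: integrableZl.
rewrite (_ : (fun z => (c * h z)%:E) = (fun z => c%:E * (EFin \o h) z)%E); last by apply/funext.
by rewrite integralZl // E.
Qed.

Lemma hasE_ext h e h' e' : hasE h e -> h =1 h' -> e = e' -> hasE h' e'.
Proof. by move=> H /funext <- <-. Qed.

Lemma hasE_cst c : hasE (fun _ => c) c.
Proof.
have := hasE_scale c (@hasE_indic setT measurableT).
rewrite probability_setT /= mulr1.
move/hasE_ext; apply => // z; by rewrite indicE in_setT mulr1.
Qed.

Lemma hasE_sum (I : Type) (s : seq I) (F : I -> T -> R) (e : I -> R) :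
  (forall i, hasE (F i) (e i)) ->
  hasE (fun z => \sum_(i <- s) F i z) (\sum_(i <- s) e i).
Proof.
move=> H; elim: s => [|i s IH].
  by apply: (hasE_ext (hasE_cst 0)) => [z|]; rewrite big_nil.
have := hasE_add (H i) IH; move/hasE_ext; apply => [z|]; by rewrite big_cons.
Qed.

Lemma hasE_le h1 e1 h2 e2 : hasE h1 e1 -> hasE h2 e2 ->
  (forall z, h1 z <= h2 z) -> e1 <= e2.
Proof.
rewrite /hasE; move=> [i1 E1] [i2 E2] le12.
rewrite -lee_fin -E1 -E2; apply: le_integral => // z _.
by rewrite lee_fin.
Qed.

Lemma hasE_meas (h : T -> R) (K : R) : measurable_fun setT h -> (forall z, 0 <= h z <= K) ->
  hasE h (fine (\int[P]_z (h z)%:E)%E).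
Proof.
move=> mh hK.
have iK := (hasE_cst K).1.
have ih : P.-integrable setT (EFin \o h).
  apply: le_integrable iK => //; first exact/measurable_EFinP.
  move=> z _ /=; have /andP[h0 hk] := hK z.
  by rewrite lee_fin !ger0_norm // (le_trans h0 hk).
split => //; rewrite fineK //; exact: integrable_fin_num.
Qed.

End HasE.


Section Perm.
Set Implicit Arguments. Unset Strict Implicit.
Variable R : realType.
Variable n : nat.
Variable P : probability (n.-tuple R) R.
Local Notation T := (n.-tuple R).

Definition Le (j : 'I_n) (x : R) : set T := [set z | tnth z j <= x].

Lemma measurable_Le j x : measurable (Le j x).
Proof.
rewrite (_ : Le j x = (fun z : T => tnth z j) @^-1` `]-oo, x]).
  by rewrite -[X in measurable X]setTI; apply: measurable_tnth => //.
by apply/seteqP; split => z /=; rewrite in_itv /=.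
Qed.

Definition permt (s : 'S_n) (z : T) : T := [tuple tnth z (s i) | i < n].

Lemma perm_pair (s : 'S_n) j k x y :
  permt s @^-1` (Le j x `&` Le k y) = Le (s j) x `&` Le (s k) y.
Proof. by apply/seteqP; split => z; rewrite /Le /permt /= !tnth_mktuple. Qed.

Lemma perm_one (s : 'S_n) j x : permt s @^-1` (Le j x) = Le (s j) x.
Proof. by apply/seteqP; split => z; rewrite /Le /permt /= !tnth_mktuple. Qed.

Lemma exists_perm2 (j k j' k' : 'I_n) : j != k -> j' != k' ->
  exists s : 'S_n, s j' = j /\ s k' = k.
Proof.
move=> jk jk'.
pose t1 := tperm j' j; pose m := t1 k'.
have mj : m != j.
  apply/eqP => mj; move: jk'; rewrite -(inj_eq (@perm_inj _ t1)).
  by rewrite -/m mj /t1 tpermL eqxx.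
exists (t1 * tperm m k)%g; rewrite !permM /t1 tpermL -/t1 -/m tpermL.
rewrite tpermD //; by rewrite eq_sym.
Qed.

Hypothesis Pinv : perm_invariant P.

Lemma P_pair (j k j' k' : 'I_n) x y : j != k -> j' != k' ->
  P (Le j x `&` Le k y) = P (Le j' x `&` Le k' y).
Proof.
move=> jk jk'; have [s [sj sk]] := exists_perm2 jk jk'.
rewrite -sj -sk -perm_pair; apply: Pinv.
by apply: measurableI; apply: measurable_Le.
Qed.

Lemma P_one (j j' : 'I_n) x : P (Le j x) = P (Le j' x).
Proof.
rewrite -(tpermL j' j) -perm_one; apply: Pinv; exact: measurable_Le.
Qed.

Lemma cdfF_eq (j : 'I_n) x : cdfF P x = fine (P (Le j x)).
Proof.
have h0 : (0 < n)%N by apply: leq_ltn_trans (ltn_ord j).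
rewrite /cdfF (P_one j (Ordinal h0)); congr (fine (P _)).
by apply/seteqP; split => z; rewrite /Le /= (tnth_nth 0).
Qed.

Lemma cdfH_eq (j k : 'I_n) x y : j != k ->
  cdfH P x y = fine (P (Le j x `&` Le k y)).
Proof.
move=> jk.
have h1 : (1 < n)%N.
  case: (ltnP 1 n) => // h; move: jk; case: j k => [j jn] [k kn] /= ne.
  exfalso; move/negP: ne; apply; apply/eqP; apply: val_inj => /=; lia.
have h0 : (0 < n)%N by apply: ltn_trans h1.
rewrite /cdfH (P_pair x y jk (_ : Ordinal h0 != Ordinal h1)) //.
by congr (fine (P _)); apply/seteqP; split => z; rewrite /Le /= !(tnth_nth 0).
Qed.

End Perm.


Section Two.
Set Implicit Arguments. Unset Strict Implicit.
Variable R : realType.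
Variable n : nat.
Variable P : probability (n.-tuple R) R.
Local Notation T := (n.-tuple R).

Definition b2r (b : bool) : R := if b then 1 else 0.

Definition G (x y : R) (j k : 'I_n) (z : T) : R :=
  Num.max (b2r (x < tnth z j) + y * b2r (y < tnth z k))
          (b2r (~~ (x < tnth z j)) * x^-1 + b2r (~~ (y < tnth z k))).

Lemma indic_Le j x (z : T) : \1_(Le j x) z = b2r (tnth z j <= x) :> R.
Proof.
rewrite indicE; case: (boolP (tnth z j <= x)) => h.
  by rewrite mem_set.
by rewrite memNset //= /Le /=; apply/negP.
Qed.

Lemma G_eq x y j k z : 0 < x -> 0 < y ->
  G x y j k z = (1 + y) - Num.min 1 (1 - x^-1 + y) * \1_(Le j x) z
     - y * \1_(Le k y) z + Num.min (1 + x^-1) (1 + y) * \1_(Le j x `&` Le k y) z.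
Proof.
move=> x0 y0.
rewrite indicI /= !indic_Le /G !ltNge !negbK.
have xi0 : 0 < x^-1 by rewrite invr_gt0.
case: (tnth z j <= x); case: (tnth z k <= y); rewrite /b2r /=.
- have [h|h] := lerP y x^-1.
    by rewrite (min_r (_ : 1 - x^-1 + y <= 1)) ?(min_r (_ : 1 + y <= 1 + x^-1)) ?max_r; lra.
  by rewrite (min_l (_ : 1 <= 1 - x^-1 + y)) ?(min_l (_ : 1 + x^-1 <= 1 + y)) ?max_r; lra.
- have [h|h] := lerP y x^-1.
    by rewrite (min_r (_ : 1 - x^-1 + y <= 1)) ?max_r; lra.
  by rewrite (min_l (_ : 1 <= 1 - x^-1 + y)) ?max_l; lra.
- by rewrite max_l; lra.
- by rewrite max_l; lra.
Qed.

Hypothesis Pinv : perm_invariant P.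

Lemma hasE_G x y j k : 0 < x -> 0 < y -> j != k ->
  hasE P (G x y j k) (phiP P x y).
Proof.
move=> x0 y0 jk.
have mj := measurable_Le j x; have mk := measurable_Le k y.
have mjk := measurableI _ _ mj mk.
have H := hasE_add (hasE_add (hasE_add (hasE_cst P (1 + y))
   (hasE_scale (- Num.min 1 (1 - x^-1 + y)) (hasE_indic P mj)))
   (hasE_scale (- y) (hasE_indic P mk)))
   (hasE_scale (Num.min (1 + x^-1) (1 + y)) (hasE_indic P mjk)).
apply: (hasE_ext H) => [z|].
  by rewrite G_eq //; ring.
by rewrite /phiP (cdfF_eq Pinv j) (cdfF_eq Pinv k) (cdfH_eq Pinv x y jk); ring.
Qed.

End Two.
Arguments b2r {R} b.


Section Core.
Variable R : realType.

Lemma core_ineq (I : finType) (p q : I -> R) (g : I -> I -> R) (lam mu : I -> R) (sg : I -> I) :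
 (forall j, 0 <= p j) -> (forall j, 0 <= q j) -> (forall j k, p j + q k <= g j k) ->
 (forall j, 0 <= lam j) -> (forall j, 0 <= mu j) -> \sum_j lam j <= 1 -> \sum_j mu j <= 1 ->
 \sum_j (lam j * p j + mu j * q j) <=
   \sum_j \sum_k lam j * mu k * g j k
   + (1 - \sum_j mu j) * \sum_j lam j * g j (sg j)
   + (1 - \sum_k lam k) * \sum_k mu k * g (sg k) k.
Proof.
move=> p0 q0 pqg l0 m0 L1 M1.
set La := \sum_j lam j; set Mu := \sum_j mu j.
have e1 : \sum_j \sum_k lam j * mu k * (p j + q k)
    = (\sum_j lam j * p j) * Mu + (\sum_k mu k * q k) * La.
  transitivity (\sum_j \sum_k (lam j * p j * mu k + mu k * q k * lam j)).
    by apply: eq_bigr => j _; apply: eq_bigr => k _; ring.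
  rewrite (eq_bigr (fun j => lam j * p j * Mu + \sum_k mu k * q k * lam j)); last first.
    by move=> j _; rewrite big_split /= mulr_sumr.
  rewrite big_split /= -mulr_suml; congr (_ + _).
  rewrite exchange_big /=; rewrite mulr_suml; apply: eq_bigr => k _.
  by rewrite -mulr_sumr.
have h1 : \sum_j \sum_k lam j * mu k * (p j + q k) <= \sum_j \sum_k lam j * mu k * g j k.
  apply: ler_sum => j _; apply: ler_sum => k _; apply: ler_wpM2l => //.
  exact: mulr_ge0.
have h2 : \sum_j lam j * p j <= \sum_j lam j * g j (sg j).
  apply: ler_sum => j _; apply: ler_wpM2l => //.
  by apply: le_trans (pqg j (sg j)); rewrite lerDl.
have h3 : \sum_k mu k * q k <= \sum_k mu k * g (sg k) k.
  apply: ler_sum => k _; apply: ler_wpM2l => //.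
  by apply: le_trans (pqg (sg k) k); rewrite lerDr.
have h2' := ler_wpM2l (_ : 0 <= 1 - Mu) h2.
have h3' := ler_wpM2l (_ : 0 <= 1 - La) h3.
rewrite big_split /=.
have : 0 <= 1 - Mu by rewrite subr_ge0.
have : 0 <= 1 - La by rewrite subr_ge0.
move=> /h3' {}h3' /h2' {}h2'.
move: h1; rewrite e1 => h1.
set A := \sum_j lam j * p j in h1 h2' *; set B := \sum_k mu k * q k in h1 h3' *.
set C := \sum_j \sum_k _ in h1 *.
set D := \sum_j lam j * g j (sg j) in h2' *.
set E := \sum_k mu k * g (sg k) k in h3' *.
lra.
Qed.

End Core.


Section Sched.
Set Implicit Arguments. Unset Strict Implicit.
Variable R : realType.
Variable n : nat.
Variable P : probability (n.-tuple R) R.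
Variable T : 'M[R]_(2, n).
Local Notation Tt := (n.-tuple R).

Local Notation a j := (T m1 j).
Local Notation b j := (T m2 j).
Local Notation r j := (T m1 j / T m2 j).

Definition f (z : Tt) := makespan (alg_alloc z T) T.

Lemma f_eq z : f z = Num.max (\sum_j b2r (r j < tnth z j) * a j)
                             (\sum_j b2r (~~ (r j < tnth z j)) * b j).
Proof.
have m21 : (m2 == m1) = false by [].
rewrite /f /makespan; congr Num.max; apply: eq_bigr => j _;
  rewrite /alg_alloc !mxE ?eqxx ?m21 /b2r; by case: (_ < _).
Qed.

Lemma f_eqI z : f z = Num.max (\sum_j a j * (1 - \1_(Le j (r j)) z))
                             (\sum_j b j * \1_(Le j (r j)) z).
Proof.
rewrite f_eq; congr Num.max; apply: eq_bigr => j _; rewrite indic_Le ltNge /b2r;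
  case: (_ <= _) => /=; ring.
Qed.

Lemma f_meas : measurable_fun setT f.
Proof.
rewrite (funext f_eqI); apply: measurable_maxr; apply: measurable_sum => j.
  apply: measurable_funM => //.
  exact (measurable_funB (measurable_cst (1:R)) (measurable_indic (measurable_Le j _))).
apply: measurable_funM => //.
exact: measurable_indic (measurable_Le _ _).
Qed.

Hypothesis Tpos : positive_matrix T.

Lemma b2r_ge0 c : 0 <= b2r c :> R.
Proof. by case: c => /=. Qed.

Lemma b2r_le1 c : b2r c <= 1 :> R.
Proof. by case: c => /=. Qed.

Lemma f_bound z : 0 <= f z <= \sum_j (a j + b j).
Proof.
have a0 j : 0 <= a j by apply/ltW/Tpos.
have b0 j : 0 <= b j by apply/ltW/Tpos.
rewrite f_eq; apply/andP; split.
  rewrite le_max; apply/orP; left; apply: sumr_ge0 => j _.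
  by apply: mulr_ge0 => //; exact: b2r_ge0.
rewrite ge_max; apply/andP; split; rewrite big_split /=.
  apply: ler_wpDr; first by apply: sumr_ge0.
  apply: ler_sum => j _; rewrite -[leRHS]mul1r; apply: ler_wpM2r => //; exact: b2r_le1.
apply: ler_wpDl; first by apply: sumr_ge0.
apply: ler_sum => j _; rewrite -[leRHS]mul1r; apply: ler_wpM2r => //; exact: b2r_le1.
Qed.

Lemma hasE_f : hasE P f (fine (exp_makespan P T)).
Proof. exact: (hasE_meas P f_meas f_bound). Qed.

Lemma sum2_le (F : 'I_n -> R) (j k : 'I_n) : j != k -> (forall i, 0 <= F i) ->
  F j + F k <= \sum_i F i.
Proof.
move=> jk F0; rewrite (bigD1 j) //= (bigD1 k) /=; last by rewrite eq_sym.
by rewrite addrA lerDl; apply: sumr_ge0.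
Qed.

Lemma f_lower (j k : 'I_n) z : j != k ->
  Num.max (b2r (r j < tnth z j) * a j + b2r (r k < tnth z k) * a k)
          (b2r (~~ (r j < tnth z j)) * b j + b2r (~~ (r k < tnth z k)) * b k) <= f z.
Proof.
move=> jk.
have a0 j' : 0 <= a j' by apply/ltW/Tpos.
have b0 j' : 0 <= b j' by apply/ltW/Tpos.
rewrite f_eq ge_max !le_max; apply/andP; split; apply/orP; [left|right];
  apply: sum2_le => // i; apply: mulr_ge0 => //; exact: b2r_ge0.
Qed.

End Sched.


Section Upper.
Set Implicit Arguments. Unset Strict Implicit.
Variable R : realType.
Variable n : nat.
Variable P : probability (n.-tuple R) R.
Variable T : 'M[R]_(2, n).
Local Notation Tt := (n.-tuple R).
Local Notation a j := (T m1 j).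
Local Notation b j := (T m2 j).
Local Notation r j := (T m1 j / T m2 j).

Hypothesis Tpos : positive_matrix T.
Variable X : 'M[R]_(2, n).
Hypothesis Xa : is_alloc X.

Local Notation M := (makespan X T).

Lemma X_ge0 i j : 0 <= X i j.
Proof. by case: (Xa.1 i j) => ->. Qed.

Lemma X2E j : X m2 j = 1 - X m1 j.
Proof. by rewrite -(Xa.2 j) addrC addKr. Qed.

Lemma X12 j : X m1 j * X m2 j = 0.
Proof. by rewrite X2E; case: (Xa.1 m1 j) => ->; rewrite ?mul0r ?subrr ?mulr0. Qed.

Lemma a_pos j : 0 < a j. Proof. exact: Tpos. Qed.
Lemma b_pos j : 0 < b j. Proof. exact: Tpos. Qed.
Lemma r_pos j : 0 < r j. Proof. by rewrite divr_gt0 // ?a_pos ?b_pos. Qed.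

Lemma single_le (F : 'I_n -> R) i : (forall i, 0 <= F i) -> F i <= \sum_i F i.
Proof. by move=> F0; rewrite (bigD1 i) //= lerDl; apply: sumr_ge0. Qed.

Lemma M_pos (i : 'I_n) : 0 < M.
Proof.
rewrite /makespan; case: (Xa.1 m1 i) => h.
  have h2 : X m2 i = 1 by rewrite X2E h subr0.
  rewrite lt_max; apply/orP; right.
  apply: lt_le_trans (single_le i _); first by rewrite h2 mul1r b_pos.
  by move=> j; rewrite mulr_ge0 ?X_ge0 // ltW // b_pos.
rewrite lt_max; apply/orP; left.
apply: lt_le_trans (single_le i _); first by rewrite h mul1r a_pos.
by move=> j; rewrite mulr_ge0 ?X_ge0 // ltW // a_pos.
Qed.

Variable i0 : 'I_n.
Local Notation Mpos := (M_pos i0).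

Definition lam j := X m1 j * a j / M.
Definition mu j := X m2 j * b j / M.

Lemma lam_ge0 j : 0 <= lam j.
Proof. by rewrite /lam divr_ge0 ?mulr_ge0 ?X_ge0 ?ltW ?a_pos ?Mpos. Qed.
Lemma mu_ge0 j : 0 <= mu j.
Proof. by rewrite /mu divr_ge0 ?mulr_ge0 ?X_ge0 ?ltW ?b_pos ?Mpos. Qed.

Lemma lam_sum : \sum_j lam j <= 1.
Proof.
rewrite /lam -mulr_suml ler_pdivrMr ?Mpos // mul1r /makespan le_max.
by rewrite lexx.
Qed.
Lemma mu_sum : \sum_j mu j <= 1.
Proof.
rewrite /mu -mulr_suml ler_pdivrMr ?Mpos // mul1r /makespan le_max.
by rewrite lexx orbT.
Qed.

Lemma lam_mu j : lam j * mu j = 0.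
Proof.
rewrite /lam /mu.
have -> : X m1 j * a j / M * (X m2 j * b j / M) =
  (X m1 j * X m2 j) * (a j * b j / M / M) by ring.
by rewrite X12 mul0r.
Qed.

Variable sg : 'I_n -> 'I_n.

Definition RHS (z : Tt) :=
  \sum_j \sum_k lam j * mu k * G (r j) (r k) j k z
   + (1 - \sum_j mu j) * \sum_j lam j * G (r j) (r (sg j)) j (sg j) z
   + (1 - \sum_k lam k) * \sum_k mu k * G (r (sg k)) (r k) (sg k) k z.

Lemma f_upper z : f T z <= M * RHS z.
Proof.
have M0 : M != 0 by rewrite gt_eqF // Mpos.
have a0 j : a j != 0 by rewrite gt_eqF // a_pos.
have b0 j : b j != 0 by rewrite gt_eqF // b_pos.
rewrite f_eq ge_max; apply/andP; split.
- rewrite (eq_bigr (fun j => M * (lam j * b2r (r j < tnth z j) +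
                             mu j * (r j * b2r (r j < tnth z j))))); last first.
    by move=> j _; rewrite /lam /mu X2E; field; rewrite ?a0 ?b0 ?M0.
  rewrite -mulr_sumr; apply: ler_wpM2l; first exact/ltW/Mpos.
  rewrite /RHS.
  apply: (@core_ineq R _ _ _ (fun j k => G (r j) (r k) j k z) lam mu sg).
  + by move=> j; exact: b2r_ge0.
  + by move=> j; rewrite mulr_ge0 ?b2r_ge0 // ltW // r_pos.
  + by move=> j k; rewrite /G le_max lexx.
  + exact: lam_ge0.
  + exact: mu_ge0.
  + exact: lam_sum.
  + exact: mu_sum.
- rewrite (eq_bigr (fun j => M * (lam j * (b2r (~~ (r j < tnth z j)) * (r j)^-1) +
                             mu j * b2r (~~ (r j < tnth z j))))); last first.
    by move=> j _; rewrite /lam /mu X2E; field; rewrite ?a0 ?b0 ?M0.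
  rewrite -mulr_sumr; apply: ler_wpM2l; first exact/ltW/Mpos.
  rewrite /RHS.
  apply: (@core_ineq R _ _ _ (fun j k => G (r j) (r k) j k z) lam mu sg).
  + by move=> j; rewrite mulr_ge0 ?b2r_ge0 // invr_ge0 ltW // r_pos.
  + by move=> j; exact: b2r_ge0.
  + by move=> j k; rewrite /G le_max lexx orbT.
  + exact: lam_ge0.
  + exact: mu_ge0.
  + exact: lam_sum.
  + exact: mu_sum.
Qed.

Hypothesis Pinv : perm_invariant P.
Hypothesis sg_neq : forall j, sg j != j.

Definition V :=
  \sum_j \sum_k lam j * mu k * phiP P (r j) (r k)
   + (1 - \sum_j mu j) * \sum_j lam j * phiP P (r j) (r (sg j))
   + (1 - \sum_k lam k) * \sum_k mu k * phiP P (r (sg k)) (r k).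

Lemma hasE_RHS : hasE P RHS V.
Proof.
have Hjk j k : hasE P (fun z => lam j * mu k * G (r j) (r k) j k z)
                      (lam j * mu k * phiP P (r j) (r k)).
  case: (eqVneq j k) => [<-|jk].
    by apply: (hasE_ext (hasE_cst P 0)) => [z|]; rewrite lam_mu mul0r.
  exact: hasE_scale (hasE_G Pinv (r_pos j) (r_pos k) jk).
have H1 := hasE_sum (index_enum _) (fun j => hasE_sum (index_enum _) (fun k => Hjk j k)).
have sgn j : j != sg j by rewrite eq_sym.
have H2 := hasE_scale (1 - \sum_j mu j) (hasE_sum (index_enum _) (fun j =>
   hasE_scale (lam j) (hasE_G Pinv (r_pos j) (r_pos (sg j)) (sgn j)))).
have H3 := hasE_scale (1 - \sum_k lam k) (hasE_sum (index_enum _) (fun k =>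
   hasE_scale (mu k) (hasE_G Pinv (r_pos (sg k)) (r_pos k) (sg_neq k)))).
exact: hasE_add (hasE_add H1 H2) H3.
Qed.

Lemma exp_upper (s : R) : (forall x y, 0 < x -> 0 < y -> phiP P x y <= s) -> 0 <= s ->
  fine (exp_makespan P T) <= s * M.
Proof.
move=> phis s0.
have := hasE_le (hasE_f P Tpos) (hasE_scale M hasE_RHS) f_upper.
move/le_trans; apply; rewrite mulrC; apply: ler_wpM2r; first exact/ltW/Mpos.
set La := \sum_j lam j; set Mu := \sum_j mu j.
have La0 : 0 <= 1 - La by rewrite subr_ge0 lam_sum.
have Mu0 : 0 <= 1 - Mu by rewrite subr_ge0 mu_sum.
have hA : \sum_j \sum_k lam j * mu k * phiP P (r j) (r k) <= s * (La * Mu).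
  rewrite /La /Mu mulr_suml mulr_sumr; apply: ler_sum => j _.
  rewrite mulr_sumr mulr_sumr; apply: ler_sum => k _.
  rewrite [leRHS]mulrC; apply: ler_wpM2l; first by rewrite mulr_ge0 ?lam_ge0 ?mu_ge0.
  by apply: phis; apply: r_pos.
have hB : \sum_j lam j * phiP P (r j) (r (sg j)) <= s * La.
  rewrite /La mulr_sumr; apply: ler_sum => j _.
  rewrite mulrC; apply: ler_wpM2r; first exact: lam_ge0.
  by apply: phis; apply: r_pos.
have hC : \sum_k mu k * phiP P (r (sg k)) (r k) <= s * Mu.
  rewrite /Mu mulr_sumr; apply: ler_sum => k _.
  rewrite mulrC; apply: ler_wpM2r; first exact: mu_ge0.
  by apply: phis; apply: r_pos.
have hB' := ler_wpM2l Mu0 hB.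
have hC' := ler_wpM2l La0 hC.
have hD : 0 <= s * ((1 - La) * (1 - Mu)) by rewrite !mulr_ge0.
rewrite /V -/La -/Mu.
move: hA hB' hC' hD.
set A := \sum_j \sum_k _; set B := \sum_j _; set C := \sum_k _.
move=> hA hB' hC' hD.
nra.
Qed.

End Upper.


Section Opt.
Set Implicit Arguments. Unset Strict Implicit.
Variable R : realType.
Variable n : nat.
Variable T : 'M[R]_(2, n).
Hypothesis Tpos : positive_matrix T.

Lemma M_ge (X : 'M[R]_(2, n)) (i : 'I_n) : is_alloc X ->
  Num.min (T m1 i) (T m2 i) <= makespan X T.
Proof.
move=> Xa.
have X0 i' j : 0 <= X i' j by case: (Xa.1 i' j) => ->.
have X2E j : X m2 j = 1 - X m1 j by rewrite -(Xa.2 j) addrC addKr.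
have a0 j : 0 <= T m1 j by apply/ltW/Tpos.
have b0 j : 0 <= T m2 j by apply/ltW/Tpos.
rewrite /makespan; case: (Xa.1 m1 i) => h.
  have h2 : X m2 i = 1 by rewrite X2E h subr0.
  rewrite le_max; apply/orP; right; rewrite ge_min; apply/orP; right.
  apply: le_trans (single_le i _); first by rewrite h2 mul1r.
  by move=> j; rewrite mulr_ge0.
rewrite le_max; apply/orP; left; rewrite ge_min; apply/orP; left.
apply: le_trans (single_le i _); first by rewrite h mul1r.
by move=> j; rewrite mulr_ge0.
Qed.

Definition X0 : 'M[R]_(2, n) := \matrix_(i, j) (if i == m1 then 1 else 0).

Lemma X0_alloc : is_alloc X0.
Proof.
split=> [i j|j]; rewrite /X0 !mxE; first by case: (i == m1); [right|left].
by rewrite eqxx /= addr0.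
Qed.

Lemma mk_ge0 X : is_alloc X -> 0 <= makespan X T.
Proof.
move=> Xa; rewrite /makespan le_max; apply/orP; left; apply: sumr_ge0 => j _.
by rewrite mulr_ge0 //; [case: (Xa.1 m1 j) => -> | apply/ltW/Tpos].
Qed.

Lemma opt_ub X : is_alloc X -> opt_makespan T <= makespan X T.
Proof.
move=> Xa; rewrite /opt_makespan.
have hl : has_lbound [set makespan X T | X in [set X | is_alloc X]].
  by exists 0 => _ [Y Ya <-]; apply: mk_ge0.
by apply: (ge_inf hl); exists X.
Qed.

Lemma opt_lb c : (forall X, is_alloc X -> c <= makespan X T) -> c <= opt_makespan T.
Proof.
move=> H; rewrite /opt_makespan; apply: lb_le_inf.
  by exists (makespan X0 T); exists X0 => //; apply: X0_alloc.
by move=> _ [Y Ya <-]; apply: H.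
Qed.

Lemma opt_pos (i : 'I_n) : 0 < opt_makespan T.
Proof.
apply: (@lt_le_trans _ _ (Num.min (T m1 i) (T m2 i))).
  by rewrite lt_min !Tpos.
by apply: opt_lb => X Xa; apply: M_ge.
Qed.

End Opt.


Section Main.
Set Implicit Arguments. Unset Strict Implicit.
Variable R : realType.
Variable n : nat.
Hypothesis hn : (2 <= n)%N.
Variable P : probability (n.-tuple R) R.
Hypothesis Pinv : perm_invariant P.

Definition i1 : 'I_n := Ordinal hn.
Definition i0 : 'I_n := Ordinal (ltn_trans (ltnSn 0) hn).
Lemma i0i1 : i0 != i1. Proof. by []. Qed.
Definition sg (j : 'I_n) := if j == i0 then i1 else i0.
Lemma sg_neq j : sg j != j.
Proof. rewrite /sg; case: (eqVneq j i0) => [->|h]; first by rewrite eq_sym. by rewrite eq_sym. Qed.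

Lemma phi11 : 1 <= phiP P 1 1.
Proof.
apply: (hasE_le (hasE_cst P 1) (hasE_G Pinv ltr01 ltr01 i0i1)) => z.
rewrite /G invr1 mul1r !mulr1 /b2r.
by case: (_ < _); case: (_ < _); rewrite /= le_max ?lexx ?orbT //; lra.
Qed.

Lemma lower_key x y d : 0 < x -> 0 < y -> 0 < d ->
  exists T : 'M[R]_(2, n), positive_matrix T /\
    ((phiP P x y / (1 + d))%:E <= exp_makespan P T * ((opt_makespan T)^-1)%:E)%E.
Proof.
move=> x0 y0 d0.
have n0 : 0 < n%:R :> R by rewrite ltr0n (leq_trans _ hn).
pose e := d / n%:R.
have e0 : 0 < e by rewrite divr_gt0.
pose Tm : 'M[R]_(2, n) := \matrix_(i, j) (if j == i0 then (if i == m1 then 1 else x^-1)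
   else if j == i1 then (if i == m1 then y else 1) else e).
have i10 : (i1 == i0) = false by [].
have Tpos : positive_matrix Tm.
  move=> i j; rewrite /Tm mxE.
  by case: (j == i0); case: (i == m1); case: (j == i1); rewrite ?invr_gt0.
exists Tm; split => //.
have hE := hasE_f P Tpos.
have eE : exp_makespan P Tm = (fine (exp_makespan P Tm))%:E := hE.2.
have Ephi : phiP P x y <= fine (exp_makespan P Tm).
  apply: (hasE_le (hasE_G Pinv x0 y0 i0i1) hE) => z.
  apply: le_trans (f_lower Tpos z i0i1).
  rewrite /G /Tm !mxE eqxx i10 /= div1r invrK divr1 !mulr1 (mulrC y).
  by [].
have E0 : 0 <= fine (exp_makespan P Tm).
  apply: (hasE_le (hasE_cst P 0) hE) => z.
  by have /andP[] := f_bound Tpos z.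
pose Xs : 'M[R]_(2, n) := \matrix_(i, j) (if i == m1 then (j == i0)%:R else (j != i0)%:R).
have Xsa : is_alloc Xs.
  split=> [i j|j]; rewrite /Xs !mxE.
    by case: (i == m1); case: (j == i0); [right|left|left|right].
  have m21 : (m2 == m1) = false by [].
  by rewrite eqxx m21; case: (j == i0); rewrite /= ?add0r ?addr0.
have hopt : opt_makespan Tm <= 1 + d.
  apply: le_trans (opt_ub Tpos Xsa) _.
  rewrite /makespan ge_max; apply/andP; split.
    rewrite (bigD1 i0) //= big1 => [|j /negbTE ji0]; last first.
      by rewrite /Xs mxE eqxx ji0 mul0r.
    by rewrite /Xs /Tm !mxE !eqxx /= mulr1 addr0 lerDl ltW.
  apply: (@le_trans _ _ (\sum_(j < n) ((j == i1)%:R + e))).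
    apply: ler_sum => j _; rewrite /Xs /Tm !mxE /=.
    case: (eqVneq j i0) => [->|ji0] /=; first by rewrite mul0r addr_ge0 ?ler0n ?ltW.
    rewrite mul1r; case: (j == i1) => /=; first by rewrite lerDl ltW.
    by rewrite add0r.
  rewrite big_split /= sumr_const card_ord (bigD1 i1) //= big1 => [|j /negbTE -> //].
  have -> : e *+ n = d by rewrite -mulr_natr /e divfK ?gt_eqF.
  by rewrite addr0.
have opt0 := opt_pos Tpos i0.
rewrite eE -EFinM lee_fin ler_pdivrMr ?ltr_pwDl //.
apply: le_trans Ephi _.
rewrite mulrAC ler_pdivlMr //.
by apply: ler_wpM2l.
exact: ltW.
Qed.

Lemma upper_T (T : 'M[R]_(2, n)) (s : R) : positive_matrix T ->
  (forall x y, 0 < x -> 0 < y -> phiP P x y <= s) ->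
  (exp_makespan P T * ((opt_makespan T)^-1)%:E <= s%:E)%E.
Proof.
move=> Tpos phis.
have s1 : 1 <= s := le_trans phi11 (phis 1 1 ltr01 ltr01).
have s0 : 0 < s := lt_le_trans ltr01 s1.
have eE : exp_makespan P T = (fine (exp_makespan P T))%:E := (hasE_f P Tpos).2.
have opt0 := opt_pos Tpos i0.
rewrite eE -EFinM lee_fin ler_pdivrMr //.
have H : forall X, is_alloc X -> fine (exp_makespan P T) / s <= makespan X T.
  move=> X Xa; rewrite ler_pdivrMr // mulrC.
  exact: (exp_upper Tpos Xa i0 Pinv sg_neq phis (ltW s0)).
have := opt_lb H.
by rewrite ler_pdivrMr // mulrC.
Qed.

End Main.


Theorem theorem5 (R : realType) (n : nat) (hn : (2 <= n)%N)
  (P : probability (n.-tuple R) R) :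
  supported_pos P -> perm_invariant P ->
  approx_ratio P = ereal_sup [set r : \bar R | exists x y : R,
                                 [/\ 0 < x, 0 < y & r = (phiP P x y)%:E]].
Proof.
move=> _ Pinv.
set Phi := [set r : \bar R | _].
have phiPhi x y : 0 < x -> 0 < y -> ((phiP P x y)%:E <= ereal_sup Phi)%E.
  by move=> x0 y0; apply: ereal_sup_ubound; exists x, y.
rewrite /approx_ratio; apply/eqP; rewrite eq_le; apply/andP; split.
- apply/ereal_supP => _ [T Tpos <-].
  case SE: (ereal_sup Phi) => [s| |]; last 2 first.
  + exact: leey.
  + by have := phiPhi 1 1 ltr01 ltr01; rewrite SE.
  + apply: (upper_T hn Pinv Tpos) => x y x0 y0; rewrite -lee_fin -SE; exact: phiPhi.
- apply/ereal_supP => _ [x [y [x0 y0 ->]]].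
  set Q := ereal_sup _.
  have key d : 0 < d -> ((phiP P x y / (1 + d))%:E <= Q)%E.
    move=> d0; have [T [Tpos h]] := lower_key hn Pinv x0 y0 d0.
    apply: le_trans h _; apply: ereal_sup_ubound; by exists T.
  case QE: Q key => [q| |] key; last 2 first.
  + exact: leey.
  + by have := key 1 ltr01.
  + rewrite lee_fin; apply/ler_addgt0Pr => e e0.
    have q1 : 0 < `|q| + 1 by rewrite ltr_pwDr // normr_ge0.
    have d0 : 0 < e / (`|q| + 1) by rewrite divr_gt0.
    have := key _ d0; rewrite lee_fin ler_pdivrMr ?(addr_gt0 ltr01 d0) // => h.
    apply: le_trans h _; rewrite mulrDr mulr1 lerD2l.
    apply: (@le_trans _ _ (`|q| * (e / (`|q| + 1)))).
      by apply: ler_wpM2r; [exact: ltW | exact: ler_norm].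
    rewrite mulrA ler_pdivrMr //.
    have := normr_ge0 q; nra.
Qed.
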